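(* Fix a set $A$, a set $V(A)$ of ''objects'', a binary relation $\trianglelefteq$ on objects, and a binary relation $\sqsubset$ on objects (with reflexive closure $\sqsubseteq$) satisfying: (i) if $x \trianglelefteq y$ and $y \sqsubset z$ then $x \trianglelefteq z$; (ii) $\sqsubset$ is well-founded on $V(A)$, i.e., there is no sequence $f$ with $f(i)\in V(A)$ and $f(i+1)\sqsubset f(i)$ for all $i$; (iii) $\sqsubset$ is transitive; (iv) if $x \sqsubset y$ and $y \in V(A)$ then $x \in V(A)$. Let $f:\mathbb{N}\to$ objects and $n\in\mathbb{N}$ be such that $f(n+1)\in V(A)$, $f$ is minimal at $n$, and $f$ is bad w.r.t. $\trianglelefteq$. Then there exists a sequence $g$ such that: $g(i)=f(i)$ for all $i\le n$; $g(n+1)\sqsubseteq f(n+1)$; for every $i\ge n+1$ there is $j\ge n+1$ with $g(i)\sqsubseteq f(j)$; the spliced sequence $f\,[n+1]\,g$ is bad w.r.t. $\trianglelefteq$; and $f\,[n+1]\,g$ is minimal at $n+1$.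
   Context: Sequences are functions $\mathbb{N}\to$ objects. A sequence $h$ is good w.r.t. $\trianglelefteq$ if there are $i<j$ with $h(i)\trianglelefteq h(j)$, and bad otherwise. For sequences $f,g$ and $n\in\mathbb{N}$, the splice $f\,[n]\,g$ is the sequence $j\mapsto g(j)$ if $n\le j$ and $j\mapsto f(j)$ otherwise. A sequence $f$ is minimal at $n$ if for every sequence $g$ such that $g(i)=f(i)$ for all $i<n$, $g(n)\sqsubset f(n)$, and for every $i\ge n$ there exists $j\ge n$ with $g(i)\sqsubseteq f(j)$, the sequence $g$ is good w.r.t. $\trianglelefteq$. *)

(* Defs.v *)
From Stdlib Require Import Arith.

Section Defs.
Context {Obj : Type}.

Definition reflc (R : Obj -> Obj -> Prop) (x y : Obj) : Prop := R x y \/ x = y.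

Definition good (le : Obj -> Obj -> Prop) (h : nat -> Obj) : Prop :=
  exists i j, i < j /\ le (h i) (h j).

Definition bad (le : Obj -> Obj -> Prop) (h : nat -> Obj) : Prop :=
  ~ good le h.

Definition splice (f : nat -> Obj) (n : nat) (g : nat -> Obj) : nat -> Obj :=
  fun j => if Nat.leb n j then g j else f j.

Definition minimal_at (le lt : Obj -> Obj -> Prop) (f : nat -> Obj) (n : nat) : Prop :=
  forall g : nat -> Obj,
    (forall i, i < n -> g i = f i) ->
    lt (g n) (f n) ->
    (forall i, n <= i -> exists j, n <= j /\ reflc lt (g i) (f j)) ->
    good le g.
End Defs.

(* Main.v *)
Require Import Defs.
From Stdlib Require Import Arith Lia Classical ClassicalEpsilon.

Lemma splice_lt {Obj} (f g : nat -> Obj) n j : j < n -> splice f n g j = f j.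
Proof. intros H; unfold splice. destruct (Nat.leb n j) eqn:E; auto.
  apply Nat.leb_le in E; lia. Qed.
Lemma splice_ge {Obj} (f g : nat -> Obj) n j : n <= j -> splice f n g j = g j.
Proof. intros H; unfold splice. apply Nat.leb_le in H. now rewrite H. Qed.

Lemma bad_ext {Obj} (le : Obj -> Obj -> Prop) h1 h2 :
  (forall i, h1 i = h2 i) -> bad le h1 -> bad le h2.
Proof. intros E B [i [j [Hij Hl]]]. apply B. exists i, j. now rewrite !E. Qed.

Lemma min_exists {Obj} (VA : Obj -> Prop) (lt : Obj -> Obj -> Prop)
  (H_ii : ~ exists f : nat -> Obj, forall i, VA (f i) /\ lt (f (S i)) (f i))
  (P : Obj -> Prop) x0 : P x0 -> (forall x, P x -> VA x) ->
  exists m, P m /\ forall y, lt y m -> ~ P y.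
Proof.
  intros Px0 PV. apply NNPP; intro Hn.
  assert (step : forall x : {x | P x}, {y : {y | P y} | lt (proj1_sig y) (proj1_sig x)}).
  { intros [x Px]. apply constructive_indefinite_description.
    destruct (classic (exists y, lt y x /\ P y)) as [[y [Hy Py]]|Hno].
    - exists (exist _ y Py); exact Hy.
    - exfalso; apply Hn; exists x; split; auto. intros y Hy Py; apply Hno; eauto. }
  set (s := fix s k := match k with 0 => exist P x0 Px0 | S k => proj1_sig (step (s k)) end).
  apply H_ii. exists (fun k => proj1_sig (s k)). intro i; split.
  - apply PV, proj2_sig.
  - simpl. exact (proj2_sig (step (s i))).
Qed.

Theorem lemma4 (Obj : Type) (VA : Obj -> Prop)
  (le lt : Obj -> Obj -> Prop)
  (H_i : forall x y z, le x y -> lt y z -> le x z)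
  (H_ii : ~ exists f : nat -> Obj, forall i, VA (f i) /\ lt (f (S i)) (f i))
  (H_iii : forall x y z, lt x y -> lt y z -> lt x z)
  (H_iv : forall x y, lt x y -> VA y -> VA x)
  (f : nat -> Obj) (n : nat)
  (Hfn : VA (f (S n)))
  (Hmin : minimal_at le lt f n)
  (Hbad : bad le f) :
  exists g : nat -> Obj,
    (forall i, i <= n -> g i = f i) /\
    reflc lt (g (S n)) (f (S n)) /\
    (forall i, S n <= i -> exists j, S n <= j /\ reflc lt (g i) (f j)) /\
    bad le (splice f (S n) g) /\
    minimal_at le lt (splice f (S n) g) (S n).
Proof.
  set (C := fun g : nat -> Obj =>
    (forall i, i <= n -> g i = f i) /\
    reflc lt (g (S n)) (f (S n)) /\
    (forall i, S n <= i -> exists j, S n <= j /\ reflc lt (g i) (f j)) /\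
    bad le g).
  assert (Hrt : forall x y z, reflc lt x y -> reflc lt y z -> reflc lt x z).
  { intros x y z [H1|H1] [H2|H2]; subst; unfold reflc; eauto. }
  destruct (min_exists VA lt H_ii (fun x => exists g, C g /\ g (S n) = x) (f (S n)))
    as [m [[g [Cg Eg]] Hm]].
  - exists f. split; [|reflexivity]. repeat split; auto.
    + right; auto.
    + intros i Hi; exists i; split; auto; right; auto.
  - intros x [g [[_ [H _]] E]]; subst. destruct H as [H|H]; [eauto|rewrite H; auto].
  - destruct Cg as (G1 & G2 & G3 & G4).
    assert (Es : forall i, g i = splice f (S n) g i).
    { intro i. destruct (Nat.le_gt_cases (S n) i).
      - now rewrite splice_ge.
      - rewrite splice_lt by lia. apply G1; lia. }
    exists g; repeat split; auto.
    + apply (bad_ext le g); auto.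
    + intros h H1 H2 H3. apply NNPP; intro Hb. apply (Hm (h (S n))).
      * rewrite splice_ge in H2 by lia. subst m; exact H2.
      * exists h; split; auto. repeat split.
        -- intros i Hi. rewrite H1 by lia. rewrite splice_lt by lia. auto.
        -- rewrite splice_ge in H2 by lia. eapply Hrt; [left; exact H2|exact G2].
        -- intros i Hi. destruct (H3 i Hi) as [j [Hj Hr]].
           rewrite splice_ge in Hr by lia.
           destruct (G3 j Hj) as [k [Hk Hr2]]. exists k; split; auto. eauto.
        -- exact Hb.
Qed.
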